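(* Let $\mathcal D$ be an ordered, oriented Descartes configuration whose curvature-center coordinate matrix $M=M_{\mathcal D}$ is an integer matrix, and let $g=\gcd(a_1,a_2,a_3,a_4)$, where $(a_1,a_2,a_3,a_4)^T$ is the first column of $M$ (the signed curvatures). Then the augmented curvature-center coordinate matrix $W_{\mathcal D}$ is an integer matrix if and only if one of the following holds: (i) $g=1$; (ii) $g=2$ and in each row of $M$ the sum of the second and third entries is odd; (iii) $g=4$ and the $4\times2$ matrix formed by the second and third columns of $M$ is congruent modulo $2$ to $\begin{pmatrix}1&0\\1&0\\1&0\\1&0\end{pmatrix}$ or to $\begin{pmatrix}0&1\\0&1\\0&1\\0&1\end{pmatrix}$.
   Context: Circles are taken in $\hat{\mathbb C}=\mathbb R^2\cup\{\infty\}$; lines count as circles. A Descartes configuration is a set of four mutually tangent circles with disjoint interiors; an ordered, oriented one carries an ordering and a total orientation, with signed curvatures $b_i$ (reciprocal radius, negative if the interior is unbounded, $0$ for lines, all reversed for negative orientation). The curvature-center coordinate matrix $M_{\mathcal D}$ is the $4\times 3$ matrix with $i$-th row $(b_i,b_ix_i,b_iy_i)$, $(x_i,y_i)$ the center of the $i$-th circle; the augmented curvature-center coordinate matrix $W_{\mathcal D}$ is the $4\times4$ matrix with $i$-th row $(\bar b_i,b_i,b_ix_i,b_iy_i)$, where $\bar b_i=b_i(x_i^2+y_i^2)-1/b_i$ is the signed curvature of the image of the circle under inversion in the unit circle. For a line the rows are $(0,n_x,n_y)$ and $(2p\cdot n,0,n_x,n_y)$ respectively, with $n$ the unit normal pointing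 into the line's interior half-plane and $p$ any point of the line. *)

(* Defs.v *)
From mathcomp Require Import all_boot all_order all_algebra.
From mathcomp Require Import reals.
Set Implicit Arguments. Unset Strict Implicit. Unset Printing Implicit Defensive.
Import Order.TTheory GRing.Theory Num.Theory.
Local Open Scope ring_scope.

Section Circles.
Variable R : realType.

Definition pt := (R * R)%type.
Definition dot (u v : pt) : R := u.1 * v.1 + u.2 * v.2.
Definition psub (u v : pt) : pt := (u.1 - v.1, u.2 - v.2).
Definition sqdist (u v : pt) : R := dot (psub u v) (psub u v).

(* A generalized circle in C^ = R^2 u {oo}, together with a choice of
   interior (an orientation):
   - Circ c r false : circle of center c, radius r, interior the open disk;
   - Circ c r true  : same circle, interior the complement of the closed disk
                      (unbounded interior);
   - Line n p       : the line through p with unit normal n, interior the open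
                      half-plane into which n points. *)
Inductive gcircle :=
| Circ of pt & R & bool
| Line of pt & pt.

Definition valid_gcircle (C : gcircle) : Prop :=
  match C with
  | Circ _ r _ => 0 < r
  | Line n _ => dot n n = 1
  end.

(* points of C^ : None is the point at infinity *)
Definition on_gcircle (C : gcircle) (z : option pt) : Prop :=
  match C, z with
  | Circ c r _, Some w => sqdist w c = r ^+ 2
  | Circ _ _ _, None => False
  | Line n p, Some w => dot (psub w p) n = 0
  | Line _ _, None => True
  end.

Definition in_interior (C : gcircle) (w : pt) : Prop :=
  match C with
  | Circ c r false => sqdist w c < r ^+ 2
  | Circ c r true => r ^+ 2 < sqdist w c
  | Line n p => 0 < dot (psub w p) n
  end.

Definition tangent (C D : gcircle) : Prop :=
  exists! z, on_gcircle C z /\ on_gcircle D z.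

Definition descartes (C : 'I_4 -> gcircle) : Prop :=
  (forall i, valid_gcircle (C i)) /\
  (forall i j, i != j -> tangent (C i) (C j)) /\
  (forall i j, i != j -> forall w, ~ (in_interior (C i) w /\ in_interior (C j) w)).

(* total orientation: eps = false is positive, eps = true negative *)
Definition osign (eps : bool) : R := if eps then -1 else 1.

Definition curv (eps : bool) (C : gcircle) : R :=
  match C with
  | Circ _ r false => osign eps * r^-1
  | Circ _ r true => osign eps * - r^-1
  | Line _ _ => 0
  end.

Definition cc_row (eps : bool) (C : gcircle) (j : nat) : R :=
  match C with
  | Circ c _ _ =>
      let b := curv eps C in
      match j with 0 => b | 1 => b * c.1 | _ => b * c.2 end
  | Line n _ =>
      let n' := (osign eps * n.1, osign eps * n.2) in
      match j with 0 => 0 | 1 => n'.1 | _ => n'.2 end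
  end.

Definition acc_row (eps : bool) (C : gcircle) (j : nat) : R :=
  match C with
  | Circ c _ _ =>
      let b := curv eps C in
      match j with
      | 0 => b * (c.1 ^+ 2 + c.2 ^+ 2) - b^-1
      | 1 => b | 2 => b * c.1 | _ => b * c.2 end
  | Line n p =>
      let n' := (osign eps * n.1, osign eps * n.2) in
      match j with 0 => 2 * dot p n' | 1 => 0 | 2 => n'.1 | _ => n'.2 end
  end.

Definition ccmx (eps : bool) (C : 'I_4 -> gcircle) : 'M[R]_(4, 3) :=
  \matrix_(i < 4, j < 3) cc_row eps (C i) j.

Definition accmx (eps : bool) (C : 'I_4 -> gcircle) : 'M[R]_(4, 4) :=
  \matrix_(i < 4, j < 4) acc_row eps (C i) j.

Definition int_mx m n (A : 'M[R]_(m, n)) : Prop :=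
  exists Z : 'M[int]_(m, n), A = map_mx (fun z : int => z%:~R) Z.

End Circles.

(* Main.v *)
Require Import Defs.
From mathcomp Require Import all_boot all_order all_algebra.
From mathcomp Require Import reals.
From mathcomp Require Import ring lra zify.
Import Order.TTheory GRing.Theory Num.Theory.
Local Open Scope ring_scope.

Lemma forall4 (P : 'I_4 -> Prop) : P 0 -> P 1 -> P 2 -> P 3 -> forall i, P i.
Proof.
move=> p0 p1 p2 p3 [[|[|[|[|n]]]] Hn] //.
- by have -> : Ordinal Hn = 0 by apply: val_inj.
- by have -> : Ordinal Hn = 1 by apply: val_inj.
- by have -> : Ordinal Hn = 2 by apply: val_inj.
- by have -> : Ordinal Hn = 3 by apply: val_inj.
Qed.

Lemma half_ex (x : int) : exists s, x = 2 * s \/ x = 2 * s + 1.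
Proof. exists (x %/ 2)%Z. lia. Qed.

Lemma dvdz2M (x y : int) : (2 %| x * y)%Z = (2 %| x)%Z || (2 %| y)%Z.
Proof.
have [s [->|->]] := half_ex x.
  have -> : 2 * s * y = 2 * (s * y) by ring. lia.
have [t [->|->]] := half_ex y.
  have -> : (2 * s + 1) * (2 * t) = 2 * (2 * s * t + t) by ring. lia.
have -> : (2 * s + 1) * (2 * t + 1) = 2 * (2 * s * t + s + t) + 1 by ring. lia.
Qed.

Lemma odd_sq (x : int) : ~~ (2 %| x)%Z -> (4 %| x ^+ 2 - 1)%Z.
Proof.
have [s [->|->]] := half_ex x; first lia.
move=> _; have -> : (2 * s + 1) ^+ 2 - 1 = 4 * (s * s + s) by ring.
lia.
Qed.

Lemma even_sq (x : int) : (2 %| x)%Z -> (4 %| x ^+ 2)%Z.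
Proof.
have [s [->|->]] := half_ex x; last lia.
move=> _; have -> : (2 * s) ^+ 2 = 4 * (s * s) by ring.
lia.
Qed.

Lemma par1 (a b x y : int) : (2 %| b)%Z -> a * b = x ^+ 2 + y ^+ 2 - 1 -> ~~ (2 %| x + y)%Z.
Proof.
move=> /dvdzP [c ->] E; apply/negP => /dvdzP [t Et].
have : 2 * (a * c) = 4 * (t * t) - 2 * (x * y) - 1.
  transitivity (a * (c * 2)); first ring.
  rewrite E; have -> : x ^+ 2 + y ^+ 2 = (x + y) ^+ 2 - 2 * (x * y) by ring.
  rewrite Et; ring.
lia.
Qed.

Lemma gcd_sq1 (b0 b1 b2 b3 : int) : gcdz (gcdz b0 b1) (gcdz b2 b3) = 1 ->
  gcdz (gcdz (b0 ^+ 2) (b1 ^+ 2)) (gcdz (b2 ^+ 2) (b3 ^+ 2)) = 1.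
Proof.
move=> H.
set G := gcdz (gcdz _ _) _.
have sqd : forall (p : nat) (b : int), prime p -> (p%:Z %| b ^+ 2)%Z -> (p%:Z %| b)%Z.
  move=> p b pp; rewrite !dvdzE abszX Euclid_dvdX //; by case/andP.
have key : forall p : nat, prime p -> (p%:Z %| G)%Z -> False.
  move=> p pp; rewrite !dvdz_gcd => /andP[/andP[h0 h1] /andP[h2 h3]].
  have : (p%:Z %| gcdz (gcdz b0 b1) (gcdz b2 b3))%Z.
    by rewrite !dvdz_gcd (sqd _ _ pp h0) (sqd _ _ pp h1) (sqd _ _ pp h2) (sqd _ _ pp h3).
  rewrite H dvdzE /= dvdn1 => /eqP p1.
  by rewrite p1 in pp.
have [n En] : exists n : nat, G = n%:Z by exists (gcdn `|gcdz (b0 ^+ 2) (b1 ^+ 2)| `|gcdz (b2 ^+ 2) (b3 ^+ 2)|).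
rewrite En; case: n En => [|[|n]] En //.
  move/eqP: En; rewrite gcdz_eq0 !gcdz_eq0 !expf_eq0 /= => /andP[/andP[/eqP e0 /eqP e1] /andP[/eqP e2 /eqP e3]].
  by move: H; rewrite e0 e1 e2 e3.
exfalso; apply: (key (pdiv n.+2)); first by rewrite pdiv_prime.
by rewrite En dvdzE /= pdiv_dvd.
Qed.

Lemma aux8a (s q : int) : 0 = 64 * (2 * q - s ^+ 2) -> s ^+ 2 = 2 * q.
Proof. lia. Qed.

Lemma aux8b (k u v : int) : 8%:Z * (2 * u - v * (2 * k)) = -8 -> False.
Proof.
have -> : 8%:Z * (2 * u - v * (2 * k)) = 16 * (u - v * k) by ring.
lia.
Qed.

Lemma aux8c (k q : int) : (2 * k + 1) ^+ 2 = 2 * q -> False.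
Proof.
have -> : (2 * k + 1) ^+ 2 = 4 * (k * k + k) + 1 by ring.
lia.
Qed.

Lemma pat0 (x y : int) : ~~ (2 %| x + y)%Z -> (2 %| x)%Z -> (2 %| x)%Z /\ ~~ (2 %| y)%Z.
Proof. lia. Qed.

Lemma pat1 (x y : int) : ~~ (2 %| x + y)%Z -> ~~ (2 %| x)%Z -> ~~ (2 %| x)%Z /\ (2 %| y)%Z.
Proof. lia. Qed.

Lemma patE (x0 y0 x y : int) : ~~ (2 %| x0 + y0)%Z -> ~~ (2 %| x + y)%Z ->
  ~~ (2 %| x0 * x + y0 * y)%Z -> (2 %| x0)%Z -> (2 %| x)%Z /\ ~~ (2 %| y)%Z.
Proof.
move=> h1 h2 h3 h4.
have P1 := dvdz2M x0 x; have P2 := dvdz2M y0 y.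
move: P1 P2 h1 h2 h3 h4.
set p1 := (x0 * x); set p2 := (y0 * y).
case e1: (2 %| x0)%Z; case e2: (2 %| x)%Z; case e3: (2 %| y0)%Z; case e4: (2 %| y)%Z; simpl; lia.
Qed.

Lemma patO (x0 y0 x y : int) : ~~ (2 %| x0 + y0)%Z -> ~~ (2 %| x + y)%Z ->
  ~~ (2 %| x0 * x + y0 * y)%Z -> ~~ (2 %| x0)%Z -> ~~ (2 %| x)%Z /\ (2 %| y)%Z.
Proof.
move=> h1 h2 h3 h4.
have P1 := dvdz2M x0 x; have P2 := dvdz2M y0 y.
move: P1 P2 h1 h2 h3 h4.
set p1 := (x0 * x); set p2 := (y0 * y).
case e1: (2 %| x0)%Z; case e2: (2 %| x)%Z; case e3: (2 %| y0)%Z; case e4: (2 %| y)%Z; simpl; lia.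
Qed.

Lemma NT_fwd (A B X Y : 'I_4 -> int) :
 (forall i, A i * B i = X i ^+ 2 + Y i ^+ 2 - 1) ->
 (forall i j, i != j -> A i * B j + A j * B i = 2 * (X i * X j + Y i * Y j + 1)) ->
 2 * (A 0 * B 0 + A 1 * B 1 + A 2 * B 2 + A 3 * B 3)
   - (A 0 + A 1 + A 2 + A 3) * (B 0 + B 1 + B 2 + B 3) = -8 ->
 2 * (B 0 ^+ 2 + B 1 ^+ 2 + B 2 ^+ 2 + B 3 ^+ 2) - (B 0 + B 1 + B 2 + B 3) ^+ 2 = 0 ->
 let g := gcdz (gcdz (B 0) (B 1)) (gcdz (B 2) (B 3)) in
 [\/ g = 1, g = 2 /\ (forall i, X i + Y i \notin dvdz 2)
   | g = 4 /\ ((forall i, X i \notin dvdz 2 /\ Y i \in dvdz 2) \/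
               (forall i, X i \in dvdz 2 /\ Y i \notin dvdz 2))].
Proof.
move=> S P C1 C2 g.
have gB : forall i, (g %| B i)%Z.
  apply: forall4; rewrite /g.
  - exact: dvdz_trans (dvdz_gcdl _ _) (dvdz_gcdl _ _).
  - exact: dvdz_trans (dvdz_gcdl _ _) (dvdz_gcdr _ _).
  - exact: dvdz_trans (dvdz_gcdr _ _) (dvdz_gcdl _ _).
  - exact: dvdz_trans (dvdz_gcdr _ _) (dvdz_gcdr _ _).
have [b Bb] : exists b : 'I_4 -> int, forall i, B i = b i * g.
  by exists (fun i => (B i %/ g)%Z) => i; rewrite divzK.
have K : g * (2 * (A 0 * b 0 + A 1 * b 1 + A 2 * b 2 + A 3 * b 3)
   - (A 0 + A 1 + A 2 + A 3) * (b 0 + b 1 + b 2 + b 3)) = -8.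
  by rewrite -C1 (Bb 0) (Bb 1) (Bb 2) (Bb 3); ring.
have [n gn] : exists n : nat, g = n%:Z by exists (gcdn `|gcdz (B 0) (B 1)| `|gcdz (B 2) (B 3)|).
have n8 : (n %| 8)%N.
  move: (K); set E := (2 * _ - _) => K'.
  have : (g %| g * E)%Z by apply: dvdz_mulr.
  by rewrite K' gn dvdzE.
have odd2 : forall i, (2 %| b i * g)%Z -> ~~ (2 %| X i + Y i)%Z.
  by move=> i h; apply: (@par1 (A i) (B i) _ _ _ (S i)); rewrite Bb.
have nle : (n <= 8)%N by apply: dvdn_leq.
case: n gn n8 nle => [|[|[|[|[|[|[|[|[|n]]]]]]]]] gn n8 nle //.
- by apply: Or31.
- apply: Or32; split => // i; apply: odd2; rewrite gn; lia.
- apply: Or33; split => //.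
  have so : forall i, ~~ (2 %| X i + Y i)%Z by move=> i; apply: odd2; rewrite gn; lia.
  have oij : forall i j, i != j -> ~~ (2 %| X i * X j + Y i * Y j)%Z.
    move=> i j ij.
    have : 4 * (A i * b j + A j * b i) = 2 * (X i * X j + Y i * Y j + 1).
      by rewrite -P // (Bb i) (Bb j) gn; ring.
    lia.
  have [x0|x0] := boolP (X 0 \in dvdz 2).
    right; apply: forall4.
    - by move: (so 0) x0; apply: pat0.
    - by apply: (@patE _ _ _ _ (so 0) (so 1) (oij 0 1 isT) x0).
    - by apply: (@patE _ _ _ _ (so 0) (so 2) (oij 0 2 isT) x0).
    - by apply: (@patE _ _ _ _ (so 0) (so 3) (oij 0 3 isT) x0).
  left; apply: forall4.
  - by move: (so 0) x0; apply: pat1.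
  - by apply: (@patO _ _ _ _ (so 0) (so 1) (oij 0 1 isT) x0).
  - by apply: (@patO _ _ _ _ (so 0) (so 2) (oij 0 2 isT) x0).
  - by apply: (@patO _ _ _ _ (so 0) (so 3) (oij 0 3 isT) x0).
- exfalso.
  have E2 : (b 0 + b 1 + b 2 + b 3) ^+ 2 = 2 * (b 0 ^+ 2 + b 1 ^+ 2 + b 2 ^+ 2 + b 3 ^+ 2).
    apply: aux8a.
    by rewrite -C2 (Bb 0) (Bb 1) (Bb 2) (Bb 3) gn; ring.
  have [k [ek|ek]] := half_ex (b 0 + b 1 + b 2 + b 3).
    move: K; rewrite ek gn; apply: aux8b.
  by move: E2; rewrite ek; apply: aux8c.
Qed.

Lemma sum4 (R : nmodType) (F : 'I_4 -> R) : \sum_(i < 4) F i = F 0 + F 1 + F 2 + F 3.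
Proof.
rewrite !big_ord_recr big_ord0 /= add0r.
by congr (_ + _ + _ + _); congr F; apply: val_inj.
Qed.


Section Main.
Variable R : realType.

Lemma cs_le (p q s t r1 r2 : R) : 0 <= r1 -> 0 <= r2 ->
  p^+2 + q^+2 = r1^+2 -> s^+2 + t^+2 = r2^+2 -> p*s + q*t <= r1 * r2.
Proof.
move=> h1 h2 e1 e2.
have L : (p*s+q*t)^+2 + (p*t-q*s)^+2 = (r1*r2)^+2.
  by rewrite exprMn -e1 -e2; ring.
have H : (p*s+q*t)^+2 <= (r1*r2)^+2 by rewrite -L lerDl sqr_ge0.
apply: le_trans (ler_norm (p*s+q*t)) _.
rewrite -ler_sqr ?nnegrE ?normr_ge0 ?mulr_ge0 //.
by rewrite real_normK ?num_real.
Qed.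

Lemma sq_le (a b : R) : 0 <= a -> 0 <= b -> a^+2 <= b^+2 -> a <= b.
Proof. by move=> ha hb; rewrite ler_sqr ?nnegrE. Qed.

Lemma geo_ff (x1 y1 x2 y2 r1 r2 zx zy : R) : 0 < r1 -> 0 < r2 ->
  (zx - x1)^+2 + (zy - y1)^+2 = r1^+2 ->
  (zx - x2)^+2 + (zy - y2)^+2 = r2^+2 ->
  (forall wx wy, ~ ((wx - x1)^+2 + (wy - y1)^+2 < r1^+2 /\
                    (wx - x2)^+2 + (wy - y2)^+2 < r2^+2)) ->
  (x1 - x2)^+2 + (y1 - y2)^+2 = (r1 + r2)^+2.
Proof.
move=> h1 h2 e1 e2 D.
apply/eqP; rewrite eq_le; apply/andP; split.
  have cs := @cs_le (x1-zx) (y1-zy) (zx-x2) (zy-y2) r1 r2 (ltW h1) (ltW h2).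
  have : (x1 - zx)^+2 + (y1 - zy)^+2 = r1^+2 by rewrite -e1; ring.
  move=> /cs /(_ e2) {}cs.
  have -> : (x1 - x2)^+2 + (y1 - y2)^+2 = ((zx - x1)^+2 + (zy - y1)^+2)
     + ((zx - x2)^+2 + (zy - y2)^+2) + 2 * ((x1 - zx) * (zx - x2) + (y1 - zy) * (zy - y2)) by ring.
  rewrite e1 e2. nra.
rewrite leNgt; apply/negP => H.
set t := r1 / (r1 + r2).
have ht : 0 < t by rewrite divr_gt0 // addr_gt0.
have ht' : 0 < 1 - t by rewrite /t subr_gt0 ltr_pdivrMr ?addr_gt0 // mul1r ltrDl.
apply: (D (x1 + t * (x2 - x1)) (y1 + t * (y2 - y1))); split.
  have -> : (x1 + t * (x2 - x1) - x1) ^+ 2 + (y1 + t * (y2 - y1) - y1) ^+ 2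
     = t^+2 * ((x1 - x2)^+2 + (y1 - y2)^+2) by ring.
  have -> : r1 ^+2 = t^+2 * (r1 + r2)^+2.
    by rewrite /t expr_div_n mulrAC -mulrA divff ?mulr1 // expf_neq0 // gt_eqF // addr_gt0.
  by rewrite ltr_pM2l // exprn_gt0.
have -> : (x1 + t * (x2 - x1) - x2) ^+ 2 + (y1 + t * (y2 - y1) - y2) ^+ 2
   = (1 - t)^+2 * ((x1 - x2)^+2 + (y1 - y2)^+2) by ring.
have -> : r2 ^+2 = (1 - t)^+2 * (r1 + r2)^+2.
  have -> : 1 - t = r2 / (r1 + r2).
    by rewrite /t; field; rewrite gt_eqF // addr_gt0.
  by rewrite expr_div_n mulrAC -mulrA divff ?mulr1 // expf_neq0 // gt_eqF // addr_gt0.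
by rewrite ltr_pM2l // exprn_gt0.
Qed.


Lemma geo_ft (x1 y1 x2 y2 r1 r2 zx zy : R) : 0 < r1 -> 0 < r2 ->
  (zx - x1)^+2 + (zy - y1)^+2 = r1^+2 ->
  (zx - x2)^+2 + (zy - y2)^+2 = r2^+2 ->
  (forall wx wy, ~ ((wx - x1)^+2 + (wy - y1)^+2 < r1^+2 /\
                    r2^+2 < (wx - x2)^+2 + (wy - y2)^+2)) ->
  (x1 - x2)^+2 + (y1 - y2)^+2 = (r1 - r2)^+2.
Proof.
move=> h1 h2 e1 e2 D.
set d2 := (x1 - x2)^+2 + (y1 - y2)^+2.
have d2ge : 0 <= d2 by rewrite /d2 addr_ge0 // sqr_ge0.
set dl := Num.sqrt d2.
have dlge : 0 <= dl := sqrtr_ge0 _.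
have dlsq : dl^+2 = d2 by rewrite sqr_sqrtr.
have up : r2 <= r1 + dl.
  apply: sq_le; [exact: ltW| by rewrite addr_ge0 // ltW|].
  have cs := @cs_le (zx-x1) (zy-y1) (x1-x2) (y1-y2) r1 dl (ltW h1) dlge e1.
  have /cs {}cs : (x1 - x2)^+2 + (y1 - y2)^+2 = dl^+2 by rewrite dlsq.
  have -> : r2^+2 = ((zx - x1)^+2 + (zy - y1)^+2) + ((x1 - x2)^+2 + (y1 - y2)^+2)
     + 2 * ((zx - x1) * (x1 - x2) + (zy - y1) * (y1 - y2)) by rewrite -e2; ring.
  rewrite e1 -/d2 -dlsq. nra.
have lo : dl + r1 <= r2.
  rewrite leNgt; apply/negP => H.
  have [e1' [e2' [E1 [E2 E3]]]] : exists a b : R, x1 - x2 = dl * a /\ y1 - y2 = dl * b /\ a^+2 + b^+2 = 1.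
    have [dl0|dlp] := eqVneq dl 0.
      have d20 : d2 = 0 by rewrite -dlsq dl0 expr0n.
      have s1 := sqr_ge0 (x1 - x2); have s2 := sqr_ge0 (y1 - y2).
      rewrite /d2 in d20.
      have hx : (x1 - x2)^+2 = 0 by lra.
      have hy : (y1 - y2)^+2 = 0 by lra.
      exists 1, 0; rewrite dl0 !mul0r; split; [|split].
      - by apply/eqP; rewrite -sqrf_eq0 hx.
      - by apply/eqP; rewrite -sqrf_eq0 hy.
      - by rewrite expr1n expr0n addr0.
    exists ((x1 - x2) / dl), ((y1 - y2) / dl).
    split; first by rewrite mulrC divfK.
    split; first by rewrite mulrC divfK.
    by rewrite !expr_div_n -mulrDl -/d2 -dlsq divff // expf_neq0.
  have [t [t0 [t1 t2]]] : exists t : R, 0 < t /\ t < r1 /\ r2 < dl + t.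
    case: (lerP r2 dl) => hd.
      exists (r1 / 2); split; first by lra. split; lra.
    exists ((r1 + r2 - dl) / 2); split; first by lra. split; lra.
  apply: (D (x1 + t * e1') (y1 + t * e2')); split.
    have -> : (x1 + t * e1' - x1)^+2 + (y1 + t * e2' - y1)^+2 = t^+2 * (e1'^+2 + e2'^+2) by ring.
    rewrite E3 mulr1 ltr_sqr ?nnegrE //; exact: ltW.
  have -> : (x1 + t * e1' - x2)^+2 + (y1 + t * e2' - y2)^+2 = (x1 - x2 + t * e1')^+2 + (y1 - y2 + t * e2')^+2 by ring.
  rewrite E1 E2.
  have -> : (dl * e1' + t * e1')^+2 + (dl * e2' + t * e2')^+2 = (dl + t)^+2 * (e1'^+2 + e2'^+2) by ring.
  rewrite E3 mulr1 ltr_sqr ?nnegrE //; [exact: ltW | lra].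
have -> : r1 - r2 = - dl by lra.
by rewrite sqrrN dlsq.
Qed.

Lemma geo_tt (x1 y1 x2 y2 r1 r2 : R) : 0 < r1 -> 0 < r2 ->
  exists wx wy, r1^+2 < (wx - x1)^+2 + (wy - y1)^+2 /\
                r2^+2 < (wx - x2)^+2 + (wy - y2)^+2.
Proof.
move=> h1 h2.
set K := `|x1| + `|x2| + r1 + r2 + 1.
have a1 := ler_norm x1. have a2 := ler_norm x2.
have b1 := normr_ge0 x1. have b2 := normr_ge0 x2.
exists K, 0; split.
  apply: (@lt_le_trans _ _ ((K - x1)^+2)); last by rewrite lerDl sqr_ge0.
  rewrite ltr_sqr ?nnegrE; [|lra|rewrite /K; lra]. rewrite /K; lra.
apply: (@lt_le_trans _ _ ((K - x2)^+2)); last by rewrite lerDl sqr_ge0.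
rewrite ltr_sqr ?nnegrE; [|lra|rewrite /K; lra]. rewrite /K; lra.
Qed.

Lemma geo_clt (cx cy r n1 n2 px py : R) : 0 < r -> n1^+2 + n2^+2 = 1 ->
  exists wx wy, r^+2 < (wx - cx)^+2 + (wy - cy)^+2 /\
                0 < (wx - px) * n1 + (wy - py) * n2.
Proof.
move=> hr hn.
set h := (cx - px) * n1 + (cy - py) * n2.
have [ah [a1 a2]] : exists a : R, - h <= a /\ 0 <= a.
  by exists `|h|; rewrite normr_ge0 -normrN ler_norm.
pose K : R := r + ah + 1.
exists (cx + K * n1), (cy + K * n2); split.
  have -> : (cx + K * n1 - cx)^+2 + (cy + K * n2 - cy)^+2 = K^+2 * (n1^+2 + n2^+2) by ring.
  rewrite hn mulr1 ltr_sqr ?nnegrE; rewrite /K; lra.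
have -> : (cx + K * n1 - px) * n1 + (cy + K * n2 - py) * n2 = h + K * (n1^+2 + n2^+2)
  by rewrite /h; ring.
rewrite hn mulr1 /K; lra.
Qed.

Lemma geo_clf (cx cy r n1 n2 px py zx zy : R) : n1^+2 + n2^+2 = 1 -> 0 < r ->
  (zx - cx)^+2 + (zy - cy)^+2 = r^+2 -> (zx - px) * n1 + (zy - py) * n2 = 0 ->
  (forall wx wy, (wx - cx)^+2 + (wy - cy)^+2 = r^+2 -> (wx - px) * n1 + (wy - py) * n2 = 0 ->
     wx = zx /\ wy = zy) ->
  (forall wx wy, ~ ((wx - cx)^+2 + (wy - cy)^+2 < r^+2 /\
                0 < (wx - px) * n1 + (wy - py) * n2)) ->
  (cx - px) * n1 + (cy - py) * n2 = - r.
Proof.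
move=> hn hr e1 e2 U D.
set h := (cx - px) * n1 + (cy - py) * n2.
set fx := cx - h * n1. set fy := cy - h * n2.
have orth : (zx - fx) * n1 + (zy - fy) * n2 = 0.
  have -> : (zx - fx) * n1 + (zy - fy) * n2 = ((zx - px) * n1 + (zy - py) * n2) - h
     + h * (n1^+2 + n2^+2) by rewrite /fx /fy /h; ring.
  by rewrite e2 hn; ring.
have [U1 U2] : 2 * fx - zx = zx /\ 2 * fy - zy = zy.
  apply: U.
    rewrite -e1.
    have -> : (2 * fx - zx - cx)^+2 + (2 * fy - zy - cy)^+2 =
      (zx - cx)^+2 + (zy - cy)^+2 + 4 * h * ((zx - fx) * n1 + (zy - fy) * n2)
      by rewrite /fx /fy; ring.
    by rewrite orth; ring.
  have -> : (2 * fx - zx - px) * n1 + (2 * fy - zy - py) * n2 =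
    2 * (h - h * (n1^+2 + n2^+2)) - ((zx - px) * n1 + (zy - py) * n2)
    by rewrite /fx /fy /h; ring.
  by rewrite e2 hn mulr1 subrr mulr0 subr0.
have zf : zx = fx /\ zy = fy by split; lra.
have hsq : h^+2 = r^+2.
  rewrite -e1; case: zf => -> ->; rewrite /fx /fy.
  have -> : (cx - h * n1 - cx)^+2 + (cy - h * n2 - cy)^+2 = h^+2 * (n1^+2 + n2^+2) by ring.
  by rewrite hn mulr1.
have : (h - r) * (h + r) = 0 by rewrite -subr_sqr hsq subrr.
move/eqP; rewrite mulf_eq0 => /orP[/eqP hp|/eqP hm]; last by lra.
exfalso; apply: (D cx cy); split.
  by rewrite !subrr expr0n addr0 exprn_gt0.
by rewrite -/h; lra.
Qed.

Lemma geo_ll (n1 n2 m1 m2 px py qx qy : R) : n1^+2 + n2^+2 = 1 -> m1^+2 + m2^+2 = 1 ->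
  (forall wx wy, ~ ((wx - px) * n1 + (wy - py) * n2 = 0 /\ (wx - qx) * m1 + (wy - qy) * m2 = 0)) ->
  (forall wx wy, ~ (0 < (wx - px) * n1 + (wy - py) * n2 /\ 0 < (wx - qx) * m1 + (wy - qy) * m2)) ->
  n1 * m1 + n2 * m2 = -1.
Proof.
move=> hn hm N D.
set cr := n1 * m2 - n2 * m1.
have cr0 : cr = 0.
  apply/eqP; apply/negP => /negP crn.
  set k1 := px * n1 + py * n2. set k2 := qx * m1 + qy * m2.
  apply: (N ((k1 * m2 - k2 * n2) / cr) ((n1 * k2 - m1 * k1) / cr)); split.
    rewrite /k1 /k2 /cr; field; exact: crn.
  rewrite /k1 /k2 /cr; field; exact: crn.
have id : (n1 * m1 + n2 * m2)^+2 + cr^+2 = (n1^+2 + n2^+2) * (m1^+2 + m2^+2) by rewrite /cr; ring.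
rewrite cr0 hn hm mulr1 expr0n addr0 in id.
have : (n1 * m1 + n2 * m2 - 1) * (n1 * m1 + n2 * m2 + 1) = 0 by rewrite -subr_sqr id expr1n subrr.
move/eqP; rewrite mulf_eq0 => /orP[/eqP hp|/eqP hm']; last by lra.
exfalso.
set h := (px - qx) * m1 + (py - qy) * m2.
have [ah [a1 a2]] : exists a : R, - h <= a /\ 0 <= a.
  by exists `|h|; rewrite normr_ge0 -normrN ler_norm.
pose K : R := ah + 1.
apply: (D (px + K * n1) (py + K * n2)); split.
  have -> : (px + K * n1 - px) * n1 + (py + K * n2 - py) * n2 = K * (n1^+2 + n2^+2) by ring.
  by rewrite hn mulr1 /K; lra.
have -> : (px + K * n1 - qx) * m1 + (py + K * n2 - qy) * m2 = h + K * (n1 * m1 + n2 * m2)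
  by rewrite /h; ring.
have hp' : n1 * m1 + n2 * m2 = 1 by lra.
by rewrite hp' mulr1 /K; lra.
Qed.

Definition qf (u v : nat -> R) : R :=
  - (u 0%N * v 1%N + u 1%N * v 0%N) / 2 + u 2%N * v 2%N + u 3%N * v 3%N.

Lemma qf_sym u v : qf u v = qf v u.
Proof. rewrite /qf; ring. Qed.

Lemma sqdistE (a b c d : R) : sqdist (a, b) (c, d) = (a - c)^+2 + (b - d)^+2.
Proof. by rewrite /sqdist /dot /psub /= !expr2. Qed.

Lemma dotnE (a b : R) : dot (a, b) (a, b) = a^+2 + b^+2.
Proof. by rewrite /dot /= !expr2. Qed.

Lemma qf_self eps (C : gcircle R) : valid_gcircle C -> qf (acc_row eps C) (acc_row eps C) = 1.
Proof.
case: C => [[x y] r s|[n1 n2] [p1 p2]] /=.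
  move=> hr; have r0 : r != 0 by rewrite gt_eqF.
  by case: s; case: eps; rewrite /qf /=; field.
rewrite dotnE => hn; rewrite /qf.
rewrite -[RHS]hn.
by case: eps => /=; rewrite /dot /=; ring.
Qed.

Lemma cc_alg (x1 y1 x2 y2 b1 b2 : R) : b1 != 0 -> b2 != 0 ->
  (x1 - x2)^+2 + (y1 - y2)^+2 = (b1^-1 + b2^-1)^+2 ->
  - ((b1 * (x1^+2 + y1^+2) - b1^-1) * b2 + b1 * (b2 * (x2^+2 + y2^+2) - b2^-1)) / 2
  + b1 * x1 * (b2 * x2) + b1 * y1 * (b2 * y2) = -1.
Proof.
move=> h1 h2 E.
apply/eqP; rewrite -subr_eq0.
have -> : - ((b1 * (x1^+2 + y1^+2) - b1^-1) * b2 + b1 * (b2 * (x2^+2 + y2^+2) - b2^-1)) / 2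
  + b1 * x1 * (b2 * x2) + b1 * y1 * (b2 * y2) - -1 =
  - (b1 * b2 / 2) * (((x1 - x2)^+2 + (y1 - y2)^+2) - (b1^-1 + b2^-1)^+2).
  by field; rewrite h1 h2.
by rewrite E subrr mulr0.
Qed.

Lemma os_inv eps (r : R) : (osign R eps * r^-1)^-1 = osign R eps * r.
Proof. by case: eps; rewrite /= ?mul1r ?mulN1r ?invrN invrK. Qed.

Lemma os_invN eps (r : R) : (osign R eps * - r^-1)^-1 = osign R eps * - r.
Proof. by case: eps; rewrite /= ?mul1r ?mulN1r ?opprK ?invrN invrK. Qed.

Lemma os_neq0 eps (r : R) : r != 0 -> osign R eps * r^-1 != 0.
Proof. by move=> h; case: eps; rewrite /= ?mul1r ?mulN1r ?oppr_eq0 invr_eq0. Qed.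

Lemma os_neq0N eps (r : R) : r != 0 -> osign R eps * - r^-1 != 0.
Proof. by move=> h; case: eps; rewrite /= ?mul1r ?mulN1r ?opprK ?oppr_eq0 invr_eq0. Qed.

Lemma qf_cc eps (x1 y1 x2 y2 r1 r2 : R) s1 s2 :
  0 < r1 -> 0 < r2 ->
  tangent (Circ (x1, y1) r1 s1) (Circ (x2, y2) r2 s2) ->
  (forall w, ~ (in_interior (Circ (x1, y1) r1 s1) w /\ in_interior (Circ (x2, y2) r2 s2) w)) ->
  qf (acc_row eps (Circ (x1, y1) r1 s1)) (acc_row eps (Circ (x2, y2) r2 s2)) = -1.
Proof.
move=> h1 h2 [[[zx zy]|] [[o1 o2] _]] D; last by [].
move: o1 o2; rewrite /= !sqdistE => o1 o2.
have n1 : r1 != 0 by rewrite gt_eqF. have n2 : r2 != 0 by rewrite gt_eqF.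
rewrite /qf /=.
case: s1 D => D; case: s2 D => D.
- have [wx [wy [A B]]] := @geo_tt x1 y1 x2 y2 r1 r2 h1 h2.
  by exfalso; apply: (D (wx, wy)); rewrite /= !sqdistE.
- have E := @geo_ft x2 y2 x1 y1 r2 r1 zx zy h2 h1 o2 o1.
  have /E {}E : forall wx wy, ~ ((wx - x2)^+2 + (wy - y2)^+2 < r2^+2 /\
                    r1^+2 < (wx - x1)^+2 + (wy - y1)^+2).
    by move=> wx wy [A B]; apply: (D (wx, wy)); rewrite /= !sqdistE.
  apply: cc_alg; rewrite ?os_neq0 ?os_neq0N // os_inv os_invN.
  rewrite -(sqrrN (x1 - x2)) -(sqrrN (y1 - y2)) !opprB E.
  by case: eps => /=; ring.
- have E := @geo_ft x1 y1 x2 y2 r1 r2 zx zy h1 h2 o1 o2.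
  have /E {}E : forall wx wy, ~ ((wx - x1)^+2 + (wy - y1)^+2 < r1^+2 /\
                    r2^+2 < (wx - x2)^+2 + (wy - y2)^+2).
    by move=> wx wy [A B]; apply: (D (wx, wy)); rewrite /= !sqdistE.
  apply: cc_alg; rewrite ?os_neq0 ?os_neq0N // os_inv os_invN E.
  by case: eps => /=; ring.
- have E := @geo_ff x1 y1 x2 y2 r1 r2 zx zy h1 h2 o1 o2.
  have /E {}E : forall wx wy, ~ ((wx - x1)^+2 + (wy - y1)^+2 < r1^+2 /\
                    (wx - x2)^+2 + (wy - y2)^+2 < r2^+2).
    by move=> wx wy [A B]; apply: (D (wx, wy)); rewrite /= !sqdistE.
  apply: cc_alg; rewrite ?os_neq0 ?os_neq0N // !os_inv E.
  by case: eps => /=; ring.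
Qed.

Lemma qf_cl eps (cx cy r n1 n2 p1 p2 : R) s :
  0 < r -> n1^+2 + n2^+2 = 1 ->
  tangent (Circ (cx, cy) r s) (Line (n1, n2) (p1, p2)) ->
  (forall w, ~ (in_interior (Circ (cx, cy) r s) w /\ in_interior (Line (n1, n2) (p1, p2)) w)) ->
  qf (acc_row eps (Circ (cx, cy) r s)) (acc_row eps (Line (n1, n2) (p1, p2))) = -1.
Proof.
move=> hr hn T D.
have r0 : r != 0 by rewrite gt_eqF.
case: s T D => T D.
  have [wx [wy [A B]]] := @geo_clt cx cy r n1 n2 p1 p2 hr hn.
  by exfalso; apply: (D (wx, wy)); rewrite /= sqdistE.
case: T => [[[zx zy]|] [[o1 o2] U]]; last by [].
move: o1 o2; rewrite /= sqdistE => o1 o2.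
have H := @geo_clf cx cy r n1 n2 p1 p2 zx zy hn hr o1 o2.
have /H {}H : forall wx wy, (wx - cx)^+2 + (wy - cy)^+2 = r^+2 ->
   (wx - p1) * n1 + (wy - p2) * n2 = 0 -> wx = zx /\ wy = zy.
  move=> wx wy A B.
  have := U (Some (wx, wy)); rewrite /= sqdistE => /(_ (conj A B)) [-> ->]; by [].
have /H {}H : forall wx wy, ~ ((wx - cx)^+2 + (wy - cy)^+2 < r^+2 /\
                0 < (wx - p1) * n1 + (wy - p2) * n2).
  by move=> wx wy [A B]; apply: (D (wx, wy)); rewrite /= sqdistE.
rewrite /qf /=.
transitivity (osign R eps ^+2 * ((cx - p1) * n1 + (cy - p2) * n2) / r).
  by case: eps; rewrite /= /dot /=; field.
by rewrite H; case: eps; rewrite /= ?expr1n ?sqrrN ?expr1n; field.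
Qed.

Lemma qf_ll eps (n1 n2 m1 m2 p1 p2 q1 q2 : R) :
  n1^+2 + n2^+2 = 1 -> m1^+2 + m2^+2 = 1 ->
  tangent (Line (n1, n2) (p1, p2)) (Line (m1, m2) (q1, q2)) ->
  (forall w, ~ (in_interior (Line (n1, n2) (p1, p2)) w /\ in_interior (Line (m1, m2) (q1, q2)) w)) ->
  qf (acc_row eps (Line (n1, n2) (p1, p2))) (acc_row eps (Line (m1, m2) (q1, q2))) = -1.
Proof.
move=> hn hm [z [_ U]] D.
have H := @geo_ll n1 n2 m1 m2 p1 p2 q1 q2 hn hm.
have /H {}H : forall wx wy, ~ ((wx - p1) * n1 + (wy - p2) * n2 = 0 /\ (wx - q1) * m1 + (wy - q2) * m2 = 0).
  move=> wx wy AB.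
  have e1 := U (Some (wx, wy)) AB.
  have e2 := U None (conj I I).
  by rewrite e1 in e2.
have /H {}H : forall wx wy, ~ (0 < (wx - p1) * n1 + (wy - p2) * n2 /\ 0 < (wx - q1) * m1 + (wy - q2) * m2).
  by move=> wx wy AB; apply: (D (wx, wy)).
rewrite /qf /=.
transitivity (osign R eps ^+2 * (n1 * m1 + n2 * m2)).
  by case: eps; rewrite /= /dot /=; ring.
by rewrite H; case: eps; rewrite /= ?expr1n ?sqrrN ?expr1n; ring.
Qed.

Lemma qf_pair eps (C D : gcircle R) : valid_gcircle C -> valid_gcircle D -> tangent C D ->
  (forall w, ~ (in_interior C w /\ in_interior D w)) ->
  qf (acc_row eps C) (acc_row eps D) = -1.
Proof.
case: C => [[x1 y1] r1 s1|[n1 n2] [p1 p2]]; case: D => [[x2 y2] r2 s2|[m1 m2] [q1 q2]] /=;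
  rewrite ?dotnE.
- exact: qf_cc.
- exact: qf_cl.
- move=> hn hr [z [Pz U]] Dj; rewrite qf_sym; apply: qf_cl => //.
    exists z; split; first by case: Pz.
    by move=> z' [A B]; apply: U.
  by move=> w [A B]; apply: (Dj w).
- exact: qf_ll.
Qed.


Definition isint (x : R) := exists z : int, x = z%:~R.

Lemma isint_intr (z : int) : isint z%:~R. Proof. by exists z. Qed.
Lemma isintD x y : isint x -> isint y -> isint (x + y).
Proof. by move=> [u ->] [v ->]; exists (u + v); rewrite intrD. Qed.
Lemma isintN x : isint x -> isint (- x).
Proof. by move=> [u ->]; exists (- u); rewrite intrN. Qed.
Lemma isintM x y : isint x -> isint y -> isint (x * y).
Proof. by move=> [u ->] [v ->]; exists (u * v); rewrite intrM. Qed.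

Lemma isint_cancel (x : R) (k m : int) : k != 0 -> x * k%:~R = (k * m)%:~R -> isint x.
Proof.
move=> k0 E; exists m; apply: (mulIf (x := k%:~R)); first by rewrite intr_eq0.
by rewrite E intrM mulrC.
Qed.

Lemma ideal_gcd (x : R) (m n : int) : isint (x * m%:~R) -> isint (x * n%:~R) ->
  isint (x * (gcdz m n)%:~R).
Proof.
move=> hm hn; have [u [v E]] := Bezoutz m n.
rewrite -E intrD !intrM mulrDr.
have -> : x * (u%:~R * m%:~R) = u%:~R * (x * m%:~R) by ring.
have -> : x * (v%:~R * n%:~R) = v%:~R * (x * n%:~R) by ring.
by apply: isintD; apply: isintM => //; apply: isint_intr.
Qed.

Lemma core_back (a : 'I_4 -> R) (bt : 'I_4 -> int) :
  gcdz (gcdz (bt 0) (bt 1)) (gcdz (bt 2) (bt 3)) = 1 ->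
  (forall i, isint (a i * (bt i)%:~R)) ->
  (forall i j, i != j -> isint (a i * (bt j)%:~R + a j * (bt i)%:~R)) ->
  forall j, isint (a j).
Proof.
move=> G H1 H2 j.
have sq : forall i, isint (a j * (bt i ^+ 2)%:~R).
  move=> i; case: (eqVneq i j) => [->|ij].
    rewrite rmorphXn expr2 mulrA; apply: isintM => //; exact: isint_intr.
  have -> : a j * (bt i ^+ 2)%:~R = (bt i)%:~R * (a i * (bt j)%:~R + a j * (bt i)%:~R)
       - (bt j)%:~R * (a i * (bt i)%:~R) by rewrite rmorphXn; ring.
  apply: isintD; last apply: isintN; apply: isintM => //; try exact: isint_intr.
  exact: H2.
have := @ideal_gcd _ _ _ (@ideal_gcd _ _ _ (sq 0) (sq 1)) (@ideal_gcd _ _ _ (sq 2) (sq 3)).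
by rewrite gcd_sq1 // mulr1.
Qed.

Lemma NT_back_k (a : 'I_4 -> R) (B X Y : 'I_4 -> int) (k : int) :
  (forall i, a i * (B i)%:~R = (X i ^+ 2 + Y i ^+ 2 - 1)%:~R) ->
  (forall i j, i != j -> a i * (B j)%:~R + a j * (B i)%:~R = (2 * (X i * X j + Y i * Y j + 1))%:~R) ->
  0 < k -> gcdz (gcdz (B 0) (B 1)) (gcdz (B 2) (B 3)) = k ->
  (forall i, (k %| X i ^+ 2 + Y i ^+ 2 - 1)%Z) ->
  (forall i j, i != j -> (k %| 2 * (X i * X j + Y i * Y j + 1))%Z) ->
  forall j, isint (a j).
Proof.
move=> S P k0 g dS dP.
set G := gcdz _ _ in g.
have gB : forall i, (G %| B i)%Z.
  apply: forall4; rewrite /G.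
  - exact: dvdz_trans (dvdz_gcdl _ _) (dvdz_gcdl _ _).
  - exact: dvdz_trans (dvdz_gcdl _ _) (dvdz_gcdr _ _).
  - exact: dvdz_trans (dvdz_gcdr _ _) (dvdz_gcdl _ _).
  - exact: dvdz_trans (dvdz_gcdr _ _) (dvdz_gcdr _ _).
rewrite g in gB.
have [bt Bb] : exists b : 'I_4 -> int, forall i, B i = b i * k.
  by exists (fun i => (B i %/ k)%Z) => i; rewrite divzK.
have kn0 : k != 0 by lia.
apply: (@core_back a bt).
- move: g; rewrite /G !Bb -!mulz_gcdl.
  have ak : (`|k|%N : int) = k by lia.
  by rewrite ak => h; apply: (mulIf kn0); rewrite mul1r.
- move=> i; have [m Em] : exists m, X i ^+ 2 + Y i ^+ 2 - 1 = k * m.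
    by exists ((X i ^+ 2 + Y i ^+ 2 - 1) %/ k)%Z; rewrite mulrC divzK.
  apply: (@isint_cancel _ k m kn0).
  by rewrite -mulrA -intrM -Bb S Em.
- move=> i j ij; have [m Em] : exists m, 2 * (X i * X j + Y i * Y j + 1) = k * m.
    by exists ((2 * (X i * X j + Y i * Y j + 1)) %/ k)%Z; rewrite [k * _]mulrC divzK // dP.
  apply: (@isint_cancel _ k m kn0).
  by rewrite mulrDl -!mulrA -!intrM -!Bb P // Em.
Qed.

Lemma par2 (x y : int) : ~~ (2 %| x + y)%Z -> (2 %| x ^+ 2 + y ^+ 2 - 1)%Z.
Proof.
have [s [e|e]] := half_ex (x + y); first lia.
move=> _; have -> : x ^+ 2 + y ^+ 2 - 1 = (x + y) ^+ 2 - 2 * (x * y) - 1 by ring.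
rewrite e; have -> : (2 * s + 1) ^+ 2 - 2 * (x * y) - 1 = 2 * (2 * s * s + 2 * s - x * y) by ring.
lia.
Qed.

Lemma par4a (x y : int) : ~~ (2 %| x)%Z -> (2 %| y)%Z -> (4 %| x ^+ 2 + y ^+ 2 - 1)%Z.
Proof. move=> /odd_sq h1 /even_sq h2; move: h1 h2; lia. Qed.

Lemma par4b (x y x' y' : int) : ~~ (2 %| x)%Z -> (2 %| y)%Z -> ~~ (2 %| x')%Z -> (2 %| y')%Z ->
  (4 %| 2 * (x * x' + y * y' + 1))%Z.
Proof.
move=> h1 h2 h3 h4; have P1 := dvdz2M x x'; have P2 := dvdz2M y y'.
rewrite (negbTE h1) (negbTE h3) /= in P1; rewrite h2 /= in P2.
move: P1 P2; lia.
Qed.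

Lemma NT_back (a : 'I_4 -> R) (B X Y : 'I_4 -> int) :
  (forall i, a i * (B i)%:~R = (X i ^+ 2 + Y i ^+ 2 - 1)%:~R) ->
  (forall i j, i != j -> a i * (B j)%:~R + a j * (B i)%:~R = (2 * (X i * X j + Y i * Y j + 1))%:~R) ->
  let g := gcdz (gcdz (B 0) (B 1)) (gcdz (B 2) (B 3)) in
  [\/ g = 1, g = 2 /\ (forall i, X i + Y i \notin dvdz 2)
   | g = 4 /\ ((forall i, X i \notin dvdz 2 /\ Y i \in dvdz 2) \/
               (forall i, X i \in dvdz 2 /\ Y i \notin dvdz 2))] ->
  forall j, isint (a j).
Proof.
move=> S P g [g1|[g2 h]|[g4 [h|h]]].
- apply: (@NT_back_k a B X Y 1 S P) => //; by move=> *; rewrite dvd1z.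
- apply: (@NT_back_k a B X Y 2 S P) => //.
    by move=> i; apply: par2.
  by move=> i j _; apply: dvdz_mulr.
- apply: (@NT_back_k a B X Y 4 S P) => //.
    by move=> i; have [h1 h2] := h i; apply: par4a.
  by move=> i j _; have [h1 h2] := h i; have [h3 h4] := h j; apply: par4b.
- apply: (@NT_back_k a B X Y 4 S P) => //.
    move=> i; have [h1 h2] := h i; rewrite (addrC (X i ^+ 2)); exact: par4a.
  move=> i j _; have [h1 h2] := h i; have [h3 h4] := h j.
  rewrite (addrC (X i * X j)); exact: par4b.
Qed.


Section Mx.
Variable u : 'I_4 -> nat -> R.
Hypothesis Hq : forall i j, qf (u i) (u j) = if i == j then 1 else -1.

Definition nrow (v : nat -> R) (k : 'I_4) : R :=
  if k == 0 then - v 1%N / 2 else if k == 1 then - v 0%N / 2 else v (val k).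

Definition Wm : 'M[R]_4 := \matrix_(i, k) u i (val k).
Definition Nm : 'M[R]_4 := \matrix_(i, k) nrow (u i) k.
Definition Dm : 'M[R]_4 := \matrix_(i, j) (if i == j then 1 else -1).

Lemma WN : Wm *m Nm^T = Dm.
Proof.
apply/matrixP => i j; rewrite !mxE sum4 !mxE /nrow /= -Hq /qf /=.
ring.
Qed.

Lemma DD : Dm *m Dm = 4%:M.
Proof.
apply/matrixP => i j; rewrite !mxE sum4 !mxE.
case: i => [[|[|[|[|?]]]] Hi] //; case: j => [[|[|[|[|?]]]] Hj] //=.
all: rewrite ?mulr1n ?mulr0n; ring.
Qed.

Lemma NDW : Nm^T *m Dm *m Wm = 4%:M.
Proof.
have h : Wm *m ((4:R)^-1 *: (Nm^T *m Dm)) = 1%:M.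
  rewrite -scalemxAr mulmxA WN DD -scalemx1 scalerA mulVf ?scale1r //.
  by rewrite pnatr_eq0.
have := mulmx1C h; rewrite -scalemxAl => h2.
have -> : Nm^T *m Dm *m Wm = 4 *: (4^-1 *: (Nm^T *m Dm *m Wm)).
  by rewrite scalerA divff ?scale1r // pnatr_eq0.
by rewrite h2 scalemx1.
Qed.

Lemma colrel2 : 2 * (u 0 1%N ^+2 + u 1 1%N ^+2 + u 2 1%N ^+2 + u 3 1%N ^+2)
  - (u 0 1%N + u 1 1%N + u 2 1%N + u 3 1%N)^+2 = 0.
Proof.
have := congr1 (fun A : 'M[R]_4 => A 0 1) NDW.
rewrite /= !mxE sum4 !mxE !sum4 !mxE /nrow /= mulr0n => H.
lra.
Qed.

Lemma colrel1 : 2 * (u 0 0%N * u 0 1%N + u 1 0%N * u 1 1%N + u 2 0%N * u 2 1%N + u 3 0%N * u 3 1%N)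
  - (u 0 0%N + u 1 0%N + u 2 0%N + u 3 0%N) * (u 0 1%N + u 1 1%N + u 2 1%N + u 3 1%N) = -8.
Proof.
have := congr1 (fun A : 'M[R]_4 => A 1 1) NDW.
rewrite /= !mxE sum4 !mxE !sum4 !mxE /nrow /= mulr1n => H.
lra.
Qed.
End Mx.

End Main.

Theorem theorem8p2 (R : realType) (C : 'I_4 -> gcircle R) (eps : bool)
    (M : 'M[int]_(4, 3)) :
  descartes C ->
  ccmx eps C = map_mx (fun z : int => z%:~R) M ->
  let g := gcdz (gcdz (M 0 0) (M 1 0)) (gcdz (M 2 0) (M 3 0)) in
  int_mx (accmx eps C) <->
  [\/ g = 1,
      g = 2 /\ (forall i : 'I_4, M i 1 + M i 2 \notin dvdz 2)
    | g = 4 /\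
      ((forall i : 'I_4, M i 1 \notin dvdz 2 /\ M i 2 \in dvdz 2) \/
       (forall i : 'I_4, M i 1 \in dvdz 2 /\ M i 2 \notin dvdz 2))].
Proof.
move=> [Hv [Ht Hd]] HM g.
pose u := fun i : 'I_4 => acc_row eps (C i).
have Hq : forall i j, qf R (u i) (u j) = if i == j then 1 else -1.
  move=> i j; case: eqVneq => [->|ij]; first exact: qf_self.
  exact: qf_pair (Ht i j ij) (Hd i j ij).
have acc_cc : forall (D : gcircle R) (j : nat), (j < 3)%N -> acc_row eps D j.+1 = cc_row eps D j.
  by case=> [c r s|n p] [|[|[|j]]].
have HMe : forall i (j : 'I_3), cc_row eps (C i) j = (M i j)%:~R.
  by move=> i j; have := congr1 (fun A : 'M[R]_(4,3) => A i j) HM; rewrite !mxE.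
pose B := fun i => M i 0; pose X := fun i => M i 1; pose Y := fun i => M i 2.
have ub : forall i, u i 1%N = (B i)%:~R by move=> i; rewrite /u acc_cc //; exact: (HMe i 0).
have ux : forall i, u i 2%N = (X i)%:~R by move=> i; rewrite /u acc_cc //; exact: (HMe i 1).
have uy : forall i, u i 3%N = (Y i)%:~R by move=> i; rewrite /u acc_cc //; exact: (HMe i 2).
pose a := fun i => u i 0%N.
have S : forall i, a i * (B i)%:~R = (X i ^+ 2 + Y i ^+ 2 - 1)%:~R.
  move=> i; have := Hq i i; rewrite eqxx /qf ub ux uy -/(a i) => H.
  rewrite rmorphB rmorphD !rmorphXn /=. lra.
have P : forall i j, i != j -> a i * (B j)%:~R + a j * (B i)%:~R = (2 * (X i * X j + Y i * Y j + 1))%:~R.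
  move=> i j ij; have := Hq i j; rewrite (negbTE ij) /qf !ub !ux !uy -/(a i) -/(a j) => H.
  rewrite !(intrM, intrD) /=. lra.
have C1 := @colrel1 R u Hq; rewrite !ub -/(a 0) -/(a 1) -/(a 2) -/(a 3) in C1.
have C2 := @colrel2 R u Hq; rewrite !ub in C2.
have C2i : 2 * (B 0 ^+ 2 + B 1 ^+ 2 + B 2 ^+ 2 + B 3 ^+ 2) - (B 0 + B 1 + B 2 + B 3) ^+ 2 = 0.
  apply/eqP; rewrite -(eqr_int R); apply/eqP.
  rewrite -[RHS]C2; rewrite !(rmorphB, rmorphD, rmorphM, rmorphXn) /=. ring.
split.
  move=> [Z HZ].
  have aZ : forall i, a i = (Z i 0)%:~R.
    by move=> i; have := congr1 (fun A : 'M[R]_4 => A i 0) HZ; rewrite !mxE.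
  apply: (@NT_fwd (fun i => Z i 0) B X Y) => //.
  - move=> i; apply/eqP; rewrite -(eqr_int R); apply/eqP.
    by rewrite intrM -aZ S.
  - move=> i j ij; apply/eqP; rewrite -(eqr_int R); apply/eqP.
    by rewrite intrD !intrM -!aZ (P i j ij) intrM.
  - apply/eqP; rewrite -(eqr_int R); apply/eqP.
    rewrite -[RHS]C1 !(rmorphB, rmorphD, rmorphM, rmorphXn) /= -!aZ. ring.
move=> disj.
have ai := @NT_back R a B X Y S P disj.
exists (\matrix_(i, k) Num.floor (accmx eps C i k)).
apply/matrixP => i k; rewrite !mxE.
have : isint R (acc_row eps (C i) k).
  case: k => [[|[|[|[|k]]]] Hk] //=.
  - exact: ai.
  - by have := ub i; rewrite /u => ->; apply: isint_intr.
  - by have := ux i; rewrite /u => ->; apply: isint_intr.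
  - by have := uy i; rewrite /u => ->; apply: isint_intr.
by move=> [z ->]; rewrite intrKfloor.
Qed.
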